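(* Let $\mathcal{S}$ be an addable abstract numeration system and let $Y\subseteq\mathbb{N}^{\mathbb{N}}$ be a subshift (over a finite subset of $\mathbb{N}$) that is $\mathcal{S}$-codable. Then its hereditary closure $\tilde Y=\{\mathbf{x}\in\mathbb{N}^{\mathbb{N}}:\exists\mathbf{y}\in Y\ \forall i\ x_i\le y_i\}$ is $\mathcal{S}$-codable.
   Context: ANS: $\mathcal{S}=(L,\prec)$ with $L$ an infinite language and $\prec$ a total order of type $\omega$; $\mathrm{rep}(n)$ is the $n$-th word of $L$; tuples are represented by left-padding with a new symbol $\#$; $Z\subseteq\mathbb{N}^d$ is $\mathcal{S}$-recognizable if $\mathrm{rep}(Z)$ is regular; $\mathcal{S}$ is addable if $\{(x,y,x+y)\}$ is $\mathcal{S}$-recognizable. For $\mathbf{y}\in\mathbb{N}^{\mathbb{N}}$: $\sum\mathbf{y}=\sum_iy_i$; if finite, $\nu(\mathbf{y})$ is the unique nondecreasing $(n_1,\dots,n_d)$ with $y_j=|\{k:n_k=j\}|$. Coding dimension of $Z\subseteq\mathbb{N}^{\mathbb{N}}$: least $d$ bounding $\sum\mathbf{y}$ on $Z$, if it exists. $Z$ is weakly $\mathcal{S}$-codable if for every $k$, $\{\nu(\mathbf{y}):\mathbf{y}\in Z,\sum\mathbf{y}\le k\}$ is $\mathcal{S}$-recognizable in each dimension; $\mathcal{S}$-codable if moreover the coding dimension is finite. *)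

(* Defs.v *)
From mathcomp Require Import all_boot.
Set Implicit Arguments. Unset Strict Implicit. Unset Printing Implicit Defensive.

Record dfa (A : finType) := Dfa {
  dstate : finType;
  dstart : dstate;
  dfinal : pred dstate;
  dtrans : dstate -> A -> dstate }.

Definition dfa_accepts (A : finType) (M : dfa A) (w : seq A) : bool :=
  @dfinal A M (foldl (@dtrans A M) (@dstart A M) w).

Definition regular (A : finType) (L : seq A -> Prop) : Prop :=
  exists M : dfa A, forall w, L w <-> dfa_accepts M w.

(* S = (L, prec): L a language over a finite alphabet, prec a (strict) total
   order on L of type omega; rep n is the n-th word of L, i.e. rep is an
   order isomorphism from (nat, <) onto (L, prec). *)
Record ANS := MkANS {
  ans_alph : finType;
  ans_lang : seq ans_alph -> Prop;
  ans_ord : seq ans_alph -> seq ans_alph -> Prop;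
  ans_rep : nat -> seq ans_alph;
  ans_rep_lang : forall n, ans_lang (ans_rep n);
  ans_rep_onto : forall w, ans_lang w -> exists n, ans_rep n = w;
  ans_rep_ord : forall m n, ans_ord (ans_rep m) (ans_rep n) <-> m < n }.

(* representation of a d-tuple s (a seq nat of size d): left-pad every
   component rep (s_i) with the new symbol # (= None) up to the maximal
   length, and read the tuple of words as a word over (Sigma u {#})^d. *)
Definition rep_tuple (S : ANS) (d : nat) (s : seq nat)
  : seq {ffun 'I_d -> option (ans_alph S)} :=
  let ws := fun i : 'I_d => ans_rep S (nth 0 s i) in
  let m := \max_(i < d) size (ws i) in
  let padded := fun i : 'I_d =>
    nseq (m - size (ws i)) None ++ map Some (ws i) in
  mkseq (fun j => [ffun i => nth None (padded i) j]) m.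

Definition recognizable (S : ANS) (d : nat) (Z : seq nat -> Prop) : Prop :=
  regular (fun w => exists s, [/\ Z s, size s = d & w = rep_tuple S d s]).

Definition addable (S : ANS) : Prop :=
  recognizable S 3 (fun s => exists x y, s = [:: x; y; x + y]).

Definition sum_le (y : nat -> nat) (k : nat) : Prop :=
  forall n, \sum_(i < n) y i <= k.

(* nu_rel y s : s is nu(y), the nondecreasing tuple with y_j = #{k : s_k = j} *)
Definition nu_rel (y : nat -> nat) (s : seq nat) : Prop :=
  sorted leq s /\ forall j, count_mem j s = y j.

Definition weakly_codable (S : ANS) (Z : (nat -> nat) -> Prop) : Prop :=
  forall k d, recognizable S d
    (fun s => exists y, [/\ Z y, sum_le y k & nu_rel y s]).

Definition codable (S : ANS) (Z : (nat -> nat) -> Prop) : Prop :=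
  weakly_codable S Z /\ exists d, forall y, Z y -> sum_le y d.

(* subshift over a finite subset A of N: values in A, shift-invariant,
   and closed in the product topology. *)
Definition subshift (Y : (nat -> nat) -> Prop) : Prop :=
  exists A : seq nat,
  [/\ forall y, Y y -> forall i, y i \in A,
      forall y, Y y -> Y (fun i => y i.+1)
    & forall x, (forall n, exists y, Y y /\ forall i, i < n -> x i = y i) -> Y x].

Definition hered_closure (Y : (nat -> nat) -> Prop) : (nat -> nat) -> Prop :=
  fun x => exists y, Y y /\ forall i, x i <= y i.

(* Main.v *)
Require Import Defs.
From mathcomp Require Import all_boot zify.
From Stdlib Require Import Classical ClassicalEpsilon.

Lemma regular_ext {A : finType} (L1 L2 : seq A -> Prop) :
  (forall w, L1 w <-> L2 w) -> regular L1 -> regular L2.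
Proof. move=> H [M HM]; exists M => w; split=> h; [apply/HM/H|apply/H/HM]; done. Qed.

Lemma regular_empty {A : finType} : regular (fun _ : seq A => False).
Proof. by exists (@Dfa A unit tt pred0 (fun _ _ => tt)) => w; split. Qed.

Lemma regular_or {A : finType} (L1 L2 : seq A -> Prop) :
  regular L1 -> regular L2 -> regular (fun w => L1 w \/ L2 w).
Proof.
move=> [M1 H1] [M2 H2].
pose M := @Dfa A (prod (dstate M1) (dstate M2)) (dstart M1, dstart M2)
  (fun q => dfinal q.1 || dfinal q.2)
  (fun q a => (dtrans q.1 a, dtrans q.2 a)).
have E : forall w q, foldl (@dtrans A M) q w =
   (foldl (@dtrans A M1) q.1 w, foldl (@dtrans A M2) q.2 w).
  by elim=> [|a w IH] [q1 q2] //=; rewrite IH.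
exists M => w; rewrite /dfa_accepts E /=.
split=> [[/H1|/H2]|/orP[h|h]]; rewrite /dfa_accepts.
- by move=> ->.
- by move=> ->; rewrite orbT.
- by left; apply/H1.
- by right; apply/H2.
Qed.

Lemma regular_bigU {A : finType} (I : Type) (s : seq I) (L : I -> seq A -> Prop) :
  (forall i, List.In i s -> regular (L i)) ->
  regular (fun w => exists i, List.In i s /\ L i w).
Proof.
elim: s => [|i s IH] H.
  by apply: regular_ext (@regular_empty A) => w; split=> [[]|[? [[] _]]].
have R := @regular_or _ _ _ (H i (or_introl erefl)) (IH (fun j hj => H j (or_intror hj))).
move: R; apply: regular_ext => w /=; split=> [[h|[j [hj h]]]|[j [[<-|hj] h]]].
- by exists i; split=> //; left.
- by exists j; split=> //; right.
- by left.
- by right; exists j.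
Qed.

Lemma regular_map {A B : finType} (h : A -> B) (L : seq A -> Prop) :
  regular L -> regular (fun w => exists v, L v /\ w = map h v).
Proof.
move=> [M HM].
pose tr (X : {set dstate M}) (b : B) : {set dstate M} :=
  [set q' | [exists q in X, exists a : A, (h a == b) && (dtrans q a == q')]].
pose N := @Dfa B ({set dstate M}) [set dstart M]
   (fun X => [exists q in X, dfinal q]) tr.
have E : forall w X q, q \in foldl tr X w <->
   exists q0, q0 \in X /\ exists v, map h v = w /\ foldl (@dtrans A M) q0 v = q.
  elim=> [|b w IH] X q /=.
    split=> [qX|[q0 [q0X [[|a v] [//= _ <-]]]]]//.
    by exists q; split=> //; exists [::].
  rewrite IH; split.
    move=> [q1 [/[!inE] /existsP[q0 /andP[q0X /existsP[a /andP[/eqP ha /eqP tq]]]]]].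
    move=> [v [hv fv]]; exists q0; split=> //; exists (a :: v); split; first by rewrite /= ha hv.
    by rewrite /= tq.
  move=> [q0 [q0X [[|a v] [//= [ha hv] fv]]]].
  exists (dtrans q0 a); split; last by exists v.
  by rewrite inE; apply/existsP; exists q0; rewrite q0X; apply/existsP; exists a; rewrite ha !eqxx.
exists N => w; rewrite /dfa_accepts /=; split.
  move=> [v [/HM Lv ->]]; apply/existsP; exists (foldl (@dtrans A M) (dstart M) v).
  rewrite [X in _ && X]Lv andbT; apply/E; exists (dstart M); split; first by rewrite inE.
  by exists v.
move=> /existsP[q /andP[/E [q0 [/[!inE] /eqP -> [v [hv fv]]]] fq]].
by exists v; split=> //; apply/HM; rewrite /dfa_accepts fv.
Qed.

Definition strip {B : eqType} (c0 : B) (v : seq B) := drop (find (predC1 c0) v) v.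
Definition headok {B : eqType} (c0 : B) (w : seq B) :=
  if w is a :: _ then a != c0 else true.

Lemma strip_spec {B : eqType} (c0 : B) v :
  v = nseq (find (predC1 c0) v) c0 ++ strip c0 v /\ headok c0 (strip c0 v).
Proof.
rewrite /strip; elim: v => [|a v [IH1 IH2]] //=.
case: eqP => [->|/eqP ne] /=; last by [].
by rewrite {1}IH1.
Qed.

Lemma strip_nseq {B : eqType} (c0 : B) n w :
  headok c0 w -> strip c0 (nseq n c0 ++ w) = w.
Proof.
rewrite /strip; elim: n => [|n IH] /= h.
  by case: w h => [|a w] //= ->; rewrite drop0.
by rewrite eqxx /= IH.
Qed.

Lemma strip_iff {B : eqType} (c0 : B) w v :
  w = strip c0 v <-> (headok c0 w /\ exists n, v = nseq n c0 ++ w).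
Proof.
split=> [->|[h [n ->]]]; last by rewrite strip_nseq.
have [e1 e2] := strip_spec c0 v; split=> //; by exists (find (predC1 c0) v).
Qed.

Lemma regular_strip {B : finType} (c0 : B) (L : seq B -> Prop) :
  regular L -> regular (fun w => exists v, L v /\ w = strip c0 v).
Proof.
move=> [M HM].
have [X0 HX0] : exists X0 : {set dstate M}, forall q, q \in X0 <->
    exists n, foldl (@dtrans B M) (dstart M) (nseq n c0) = q.
  exists [set q | is_left (excluded_middle_informative
     (exists n, foldl (@dtrans B M) (dstart M) (nseq n c0) = q))].
  by move=> q; rewrite inE; case: excluded_middle_informative.
pose img (X : {set dstate M}) a : {set dstate M} :=
   [set q' | [exists q in X, dtrans q a == q']].
have E : forall w X q, q \in foldl img X w <->
    exists q0, q0 \in X /\ foldl (@dtrans B M) q0 w = q.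
  elim=> [|a w IH] X q /=.
    by split=> [qX|[q0 [q0X <-]]] //; exists q.
  rewrite IH; split.
    move=> [q1 [/[!inE] /existsP[q0 /andP[q0X /eqP tq]] fv]].
    by exists q0; split=> //; rewrite tq.
  move=> [q0 [q0X fv]]; exists (dtrans q0 a); split=> //.
  by rewrite inE; apply/existsP; exists q0; rewrite q0X eqxx.
have F : forall w X, [exists q in foldl img X w, dfinal q] <->
    exists q0, q0 \in X /\ dfinal (foldl (@dtrans B M) q0 w).
  move=> w X; split.
    by move=> /existsP[q /andP[/E[q0 [q0X <-]] fq]]; exists q0.
  move=> [q0 [q0X fq]]; apply/existsP; exists (foldl (@dtrans B M) q0 w).
  by rewrite fq andbT; apply/E; exists q0.
pose tr (p : bool * {set dstate M}) (a : B) : bool * {set dstate M} :=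
  if p.1 || (a != c0) then (true, img p.2 a) else (true, set0).
pose N := @Dfa B (prod bool {set dstate M}) (false, X0)
  (fun p => [exists q in p.2, dfinal q]) tr.
have T : forall w X, foldl tr (true, X) w = (true, foldl img X w).
  by elim=> [|a w IH] X //=; rewrite /tr /= IH.
have G : forall w, dfa_accepts N w <->
    (headok c0 w /\ exists n, dfa_accepts M (nseq n c0 ++ w)).
  rewrite /dfa_accepts /=; case=> [|a w] /=.
    have F0 := F [::] X0; simpl in F0; rewrite F0; split=> [[q0 [/HX0 [n <-] fq]]|[_ [n fq]]].
      by split=> //; exists n; rewrite cats0.
    by exists (foldl (@dtrans B M) (dstart M) (nseq n c0)); rewrite cats0 in fq; split=> //; apply/HX0; exists n.
  rewrite -/tr.
  have -> : tr (false, X0) a = (true, if a != c0 then img X0 a else set0).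
    by rewrite /tr /=; case: (a != c0).
  case: eqP => [->|/eqP ne] /=.
    rewrite T F; split=> [[q0 [] ]|[]]; by rewrite ?inE ?eqxx.
  rewrite T F; split.
    move=> [q0 [/[!inE] /existsP[q1 /andP[/HX0[n <-] /eqP <-]] fq]].
    by split=> //; exists n; rewrite foldl_cat.
  move=> [_ [n fq]]; exists (dtrans (foldl (@dtrans B M) (dstart M) (nseq n c0)) a).
  split; last by rewrite foldl_cat in fq.
  by rewrite inE; apply/existsP; exists (foldl (@dtrans B M) (dstart M) (nseq n c0)); rewrite eqxx andbT; apply/HX0; exists n.
exists N => w; rewrite G; split.
  move=> [v [Lv /strip_iff [h [n e]]]]; split=> //; exists n; apply/HM; by rewrite -e.
move=> [h [n /HM Lv]]; exists (nseq n c0 ++ w); split=> //.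
by apply/strip_iff; split=> //; exists n.
Qed.

Section Rep.
Variable S : ANS.
Local Notation A := (ans_alph S).
Definition c0 (d : nat) : {ffun 'I_d -> option A} := [ffun _ => None].
Definition rowof d (i : 'I_d) (W : seq {ffun 'I_d -> option A}) := map (fun c : {ffun 'I_d -> option A} => c i) W.
Arguments rowof {d}.
Definition pad (m : nat) (w : seq A) := nseq (m - size w) None ++ map Some w.
Definition mx d (s : seq nat) := \max_(i < d) size (ans_rep S (nth 0 s i)).

Lemma rep_tuple_size d s : size (rep_tuple S d s) = mx d s.
Proof. by rewrite size_mkseq. Qed.

Lemma mx_ge d s (i : 'I_d) : size (ans_rep S (nth 0 s i)) <= mx d s.
Proof. exact: (leq_bigmax (F := fun i : 'I_d => size (ans_rep S (nth 0 s i))) i). Qed.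

Lemma rep_tuple_row d s i :
  rowof i (rep_tuple S d s) = pad (mx d s) (ans_rep S (nth 0 s i)).
Proof.
have le := mx_ge d s i.
apply: (@eq_from_nth _ None).
  by rewrite size_map rep_tuple_size /pad size_cat size_nseq size_map subnK.
move=> j; rewrite size_map rep_tuple_size => lt.
rewrite (nth_map (c0 d)) ?rep_tuple_size // /rep_tuple nth_mkseq // ffunE.
by [].
Qed.

Lemma word_eq d (W1 W2 : seq {ffun 'I_d -> option A}) :
  size W1 = size W2 -> (forall i, rowof i W1 = rowof i W2) -> W1 = W2.
Proof.
move=> sz H; apply: (eq_from_nth (x0 := c0 d)) => // j lt; apply/ffunP => i.
have := congr1 (fun r => nth None r j) (H i).
by rewrite /rowof !(nth_map (c0 d)) // -sz.
Qed.

Definition colf e d (f : 'I_d -> nat) (c : {ffun 'I_e -> option A}) :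
  {ffun 'I_d -> option A} :=
  [ffun i => if insub (f i) is Some k then c k else None].

Arguments colf {e d}.

Lemma rowof_colf e d (f : 'I_d -> nat) (i : 'I_d) (H : f i < e) W :
  rowof i (map (colf f) W) = rowof (Ordinal H) W.
Proof.
rewrite /rowof -map_comp; apply: eq_map => c /=; rewrite ffunE.
case: insubP => [k _ kE|]; last by rewrite H.
by congr (c _); apply: val_inj.
Qed.

Lemma find_eq (T : Type) (x0 : T) (p : pred T) s n :
  n <= size s -> (forall j, j < n -> ~~ p (nth x0 s j)) ->
  (n < size s -> p (nth x0 s n)) -> find p s = n.
Proof.
move=> ns H1 H2; case: (ltngtP (find p s) n) => // lt.
  have hs : has p s by rewrite has_find (leq_trans lt ns).
  by have := H1 _ lt; rewrite nth_find.
have := before_find x0 lt; rewrite H2 //.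
exact: leq_trans lt (find_size _ _).
Qed.

Lemma key d e t s (f : 'I_d -> nat) : size t = e -> (forall i, f i < e) ->
  (forall i : 'I_d, nth 0 s i = nth 0 t (f i)) ->
  rep_tuple S d s = strip (c0 d) (map (colf f) (rep_tuple S e t)).
Proof.
move=> st Hf Hs.
set W := map _ _.
set Mt := mx e t. set Ms := mx d s.
have rowW : forall i, rowof i W = pad Mt (ans_rep S (nth 0 s i)).
  by move=> i; rewrite rowof_colf rep_tuple_row /= Hs.
have sW : size W = Mt by rewrite size_map rep_tuple_size.
have MsMt : Ms <= Mt.
  apply/bigmax_leqP => i _; rewrite Hs.
  exact: (mx_ge e t (Ordinal (Hf i))).
have nthW : forall j i, j < Mt ->
    (nth (c0 d) W j) i = nth None (pad Mt (ans_rep S (nth 0 s i))) j.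
  move=> j i lt; rewrite -rowW /rowof (nth_map (c0 d)) //; by rewrite sW.
have Hfind : find (predC1 (c0 d)) W = Mt - Ms.
  apply: (@find_eq _ (c0 d)).
  - by rewrite sW leq_subr.
  - move=> j lt; rewrite /= negbK; apply/eqP/ffunP => i; rewrite ffunE nthW; last by lia.
    have := mx_ge d s i; rewrite -/Ms => hi.
    rewrite /pad nth_cat size_nseq ifT; last by lia.
    by rewrite nth_nseq ifT //; lia.
  - rewrite sW => lt.
    have d0 : 0 < #|'I_d|.
      case: (pickP (fun _ : 'I_d => true)) => [i1 _|none].
        by rewrite card_ord; exact: leq_ltn_trans (leq0n i1) (ltn_ord i1).
      have : Ms <= 0 by apply/bigmax_leqP => i; rewrite none.
      by lia.
    have [i0 Hi0] := eq_bigmax (fun i : 'I_d => size (ans_rep S (nth 0 s i))) d0.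
    apply/eqP => e0; have := congr1 (fun c : {ffun 'I_d -> option A} => c i0) e0.
    rewrite ffunE nthW; last by lia.
    have HMs : Ms = size (ans_rep S (nth 0 s i0)) by [].
    rewrite /pad nth_cat size_nseq -HMs ltnn subnn.
    case E: (ans_rep S (nth 0 s i0)) => [|a w] //.
    by move: lt; rewrite HMs E /=; lia.
rewrite /strip Hfind; apply: word_eq.
  by rewrite size_drop sW rep_tuple_size; lia.
move=> i; rewrite rep_tuple_row {1}/rowof map_drop -/(rowof i W) rowW.
have := mx_ge d s i; rewrite -/Ms => hi.
rewrite /pad (_ : Mt - size (ans_rep S (nth 0 s i)) = (Mt - Ms) + (Ms - size (ans_rep S (nth 0 s i)))); last by lia.
by rewrite nseqD -catA drop_size_cat // size_nseq.
Qed.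

End Rep.

Lemma sum_count (s : seq nat) n :
  \sum_(i < n) count_mem (i : nat) s = count (fun v => v < n) s.
Proof.
elim: n => [|n IH].
  rewrite big_ord0; elim: s => //.
rewrite big_ord_recr /= IH -count_predUI.
rewrite (eq_count (a1 := predI _ _) (a2 := pred0)); last first.
  by move=> v /=; apply/negbTE; apply/andP => -[h /eqP e]; rewrite e ltnn in h.
rewrite count_pred0 addn0; apply: eq_count => v /=.
by rewrite ltnS (leq_eqVlt v) orbC.
Qed.

Lemma mem_sumn (s : seq nat) x : x \in s -> x <= sumn s.
Proof.
elim: s => //= a s IH; rewrite in_cons => /orP[/eqP->|/IH h].
  exact: leq_addr.
exact: leq_trans h (leq_addl _ _).
Qed.

Lemma size_sum x s : nu_rel x s -> size s = \sum_(i < (sumn s).+1) x i.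
Proof.
move=> nu; rewrite (eq_bigr (fun i : 'I_(sumn s).+1 => count_mem (i : nat) s)); last first.
  by move=> i _; rewrite (proj2 nu).
rewrite sum_count -(count_predT s); apply: eq_in_count => v /mem_sumn /=.
by rewrite ltnS => ->.
Qed.

Lemma psum_mono (y : nat -> nat) m n : m <= n -> \sum_(i < m) y i <= \sum_(i < n) y i.
Proof.
move=> mn; rewrite -!(big_mkord xpredT) (big_cat_nat (leq0n m) mn) /=.
exact: leq_addr.
Qed.

Lemma fin_supp (y : nat -> nat) D : sum_le y D -> exists N, forall j, N <= j -> y j = 0.
Proof.
move=> H; apply: NNPP => hn.
have big : forall c, exists n, c <= \sum_(i < n) y i.
  elim=> [|c [n hc]]; first by exists 0.
  have [j [nj yj]] : exists j, n <= j /\ y j <> 0.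
    apply: NNPP => h; apply: hn; exists n => j nj; apply: NNPP => yj; apply: h; by exists j.
  exists j.+1; rewrite big_ord_recr /=.
  have := @psum_mono y _ _ nj => h2; rewrite -addn1 leq_add //; [exact: leq_trans hc h2 | by case: (y j) yj].
have [n hn'] := big D.+1; have := H n; lia.
Qed.

Fixpoint tl (y : nat -> nat) n := if n is n'.+1 then tl y n' ++ nseq (y n') n' else [::].

Lemma count_tl y n j : count_mem j (tl y n) = if j < n then y j else 0.
Proof.
elim: n => [|n IH] //=; rewrite count_cat IH count_nseq /=.
case: (ltngtP j n) => h.
- by rewrite ltnS (ltnW h) mul0n addn0.
- by rewrite ltnS leqNgt h.
- by rewrite h ltnSn mul1n.
Qed.

Lemma size_tl y n : size (tl y n) = \sum_(i < n) y i.
Proof. by elim: n => [|n IH]; rewrite ?big_ord0 //= big_ord_recr size_cat size_nseq IH. Qed.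

Lemma nu_exists y D : sum_le y D -> exists t, nu_rel y t /\ size t <= D.
Proof.
move=> H; have [N HN] := @fin_supp y D H.
have P : perm_eq (sort leq (tl y N)) (tl y N) by rewrite perm_sort perm_refl.
exists (sort leq (tl y N)); split; last by rewrite size_sort size_tl; exact: H.
split; first exact: (sort_sorted leq_total).
move=> j; rewrite (permP P) count_tl; case: ltnP => // h; by rewrite HN.
Qed.

Fixpoint masks e : seq (seq bool) :=
  if e is e'.+1 then [seq true :: m | m <- masks e'] ++ [seq false :: m | m <- masks e']
  else [:: [::]].

Lemma in_masks m : List.In m (masks (size m)).
Proof.
elim: m => [|b m IH] /=; first by left.
apply: List.in_or_app; case: b; [left|right]; exact: List.in_map.
Qed.

Lemma In_mem (T : eqType) (x : T) s : x \in s -> List.In x s.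
Proof. elim: s => //= a s IH; rewrite in_cons => /orP[/eqP->|/IH]; auto. Qed.

Theorem mainTheorem17 (S : ANS) (Y : (nat -> nat) -> Prop) :
  addable S -> subshift Y -> codable S Y -> codable S (hered_closure Y).
Proof.
move=> _ _ [Hw [D HD]]; split; last first.
  exists D => x [y [Yy le]] n; apply: leq_trans (HD y Yy n).
  by apply: leq_sum => i _.
move=> k d; rewrite /recognizable.
have sizek : forall x s, sum_le x k -> nu_rel x s -> size s <= k.
  by move=> x s hx nu; rewrite (@size_sum x s nu); exact: hx.
case: (leqP d k) => [dk|kd]; last first.
  apply: regular_ext (@regular_empty _) => w; split=> // -[s [[x [_ hx nu]] sz _]].
  by have := sizek x s hx nu; lia.
pose Lsrc t := exists y, [/\ Y y, sum_le y D & nu_rel y t].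
pose V e m w := exists t, [/\ Lsrc t, size t = e, size m = e, count id m = d
   & w = rep_tuple S d (mask m t)].
have RV : forall e m, regular (V e m).
  move=> e m; case: (boolP ((size m == e) && (count id m == d))) => [/andP[/eqP sm /eqP cm]|hc];
    last first.
    apply: regular_ext (@regular_empty _) => w; split=> // -[t [_ _ sm' cm' _]].
    by move: hc; rewrite sm' cm' !eqxx.
  pose f (i : 'I_d) := nth 0 (mask m (iota 0 e)) i.
  have sz_mi : size (mask m (iota 0 e)) = d by rewrite size_mask ?size_iota.
  have Hf : forall i, f i < e.
    move=> i; have : f i \in mask m (iota 0 e) by apply: mem_nth; rewrite sz_mi.
    by move/mem_mask; rewrite mem_iota.
  have Hk : forall t, size t = e ->
      rep_tuple S d (mask m t) = strip (c0 S d) (map (@colf S e d f) (rep_tuple S e t)).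
    move=> t st; apply: key => // i.
    have -> : mask m t = map (nth 0 t) (mask m (iota 0 e)).
      by rewrite map_mask -st; congr (mask m _); exact: (esym (mkseq_nth 0 t)).
    by rewrite (nth_map 0) // sz_mi.
  have R1 := Hw D e.
  have R2 := @regular_strip _ (c0 S d) _ (@regular_map _ _ (@colf S e d f) _ R1).
  move: R2; apply: regular_ext => w; split.
    move=> [u [[v [[t [Lt st ->]] ->]] ->]].
    by exists t; split=> //; rewrite Hk.
  move=> [t [Lt st _ _ ->]]; exists (map (@colf S e d f) (rep_tuple S e t)); split; last exact: Hk.
  by exists (rep_tuple S e t); split=> //; exists t; split.
have R := @regular_bigU _ _ (iota 0 D.+1)
  (fun e w => exists m, List.In m (masks e) /\ V e m w)
  (fun e _ => @regular_bigU _ _ (masks e) (V e) (fun m _ => RV e m)).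
move: R; apply: regular_ext => w; split.
  move=> [e [_ [m [_ [t [[y [Yy hyD nuy]] st sm cm ->]]]]]].
  exists (mask m t); split=> //; last by rewrite size_mask ?st.
  exists (fun j => count_mem j (mask m t)); split.
  - exists y; split=> // j; rewrite -(proj2 nuy); exact: leq_count_subseq (mask_subseq m t).
  - move=> n /=; rewrite sum_count; apply: leq_trans (count_size _ _) _.
    by rewrite size_mask ?st //; lia.
  - split=> //; exact: (subseq_sorted leq_trans (mask_subseq m t) (proj1 nuy)).
move=> [s [[x [[y [Yy xy]] hx nu] sz ->]]].
have [t [nut st]] := @nu_exists y D (HD y Yy).
exists (size t); split; first by apply: In_mem; rewrite mem_iota.
have sub : subseq s t.
  have /count_subseqP[s' ss' ps] : forall v, count_mem v s <= count_mem v t.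
    by move=> v; rewrite (proj2 nu) (proj2 nut) xy.
  have -> : s = s' := sorted_eq leq_trans anti_leq (proj1 nu)
     (subseq_sorted leq_trans ss' (proj1 nut)) ps.
  exact: ss'.
have /subseqP[m sm ems] := sub.
exists m; split; first by rewrite -sm; exact: in_masks.
exists t; split=> //; first by exists y; split=> //; exact: HD.
- by rewrite -sz ems size_mask.
- by rewrite ems.
Qed.
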